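(* For every $m\geqslant4$, $$\left|\mathcal{D}_m-\frac12\cdot\frac{1}{2\uparrow\uparrow m}\right|\leqslant\frac{3}{3^{2\uparrow\uparrow(m-1)}}.$$
   Context: $H(n)$ is the height of the factorization tree of $n\geqslant1$: $H(1)=0$ and, for $n=p_1^{\alpha_1}\cdots p_k^{\alpha_k}>1$ with distinct primes $p_i$, $H(n)=1+\max_i H(\alpha_i)$. Tetration: $a\uparrow\uparrow0=1$, $a\uparrow\uparrow b=a^{a\uparrow\uparrow(b-1)}$. $\mathcal{D}_m$ denotes the natural density of the set $\{n\geqslant 1: H(n)=m\}$, i.e. $\mathcal{D}_m=\lim_{x\to\infty}\frac1x\#\{n\leqslant x:H(n)=m\}$ (which exists). *)

(* Defs.v *)
From mathcomp Require Import all_boot.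
From Stdlib Require Import Reals.

Set Implicit Arguments.
Unset Strict Implicit.
Unset Printing Implicit Defensive.

(* Height of the factorization tree, computed with fuel.  Since logn p n < n, fuel n is enough. *)
Fixpoint Hfuel (k n : nat) : nat :=
  match k with
  | 0 => 0
  | k'.+1 => if n <= 1 then 0
             else (\max_(p <- primes n) Hfuel k' (logn p n)).+1
  end.

Definition H (n : nat) : nat := Hfuel n n.

Fixpoint tetr (a b : nat) : nat :=
  match b with
  | 0 => 1
  | b'.+1 => a ^ (tetr a b')
  end.

Definition countH (m N : nat) : nat := count (fun n => H n == m) (iota 1 N).

(* The natural density D_m is the limit of countH m N / N as N -> oo. *)
Definition density_seq (m : nat) : nat -> R :=
  fun N => (INR (countH m N) / INR N)%R.

(* Main.v *)
Require Import Defs.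
From mathcomp Require Import all_boot.
From Stdlib Require Import Reals.
From Stdlib Require Import Lra Lia.
From mathcomp Require Import zify.

Lemma powE a b : Nat.pow a b = expn a b.
Proof. elim: b => [|b IH] //=. by rewrite expnS IH. Qed.

Lemma tetrS a b : tetr a b.+1 = expn a (tetr a b).
Proof. by rewrite /= powE. Qed.

Lemma Hfuel_eq k1 k2 n : n <= k1 -> n <= k2 -> Hfuel k1 n = Hfuel k2 n.
Proof.
elim: k1 k2 n => [|k1 IH] [|k2] n //=.
- by rewrite leqn0 => /eqP -> .
- by rewrite leqn0 => _ /eqP -> .
- move=> h1 h2; case: ifP => // n1; congr S; apply: eq_bigr => p _.
  have hl : logn p n < n by apply: ltn_logl; lia.
  apply: IH; lia.
Qed.

Lemma H_rec n : H n = if n <= 1 then 0 else (\max_(p <- primes n) H (logn p n)).+1.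
Proof.
rewrite /H; case: n => [|n] //=; case: ifP => // h; congr S.
apply: eq_bigr => p _; rewrite /H; apply: Hfuel_eq => //.
have := @ltn_logl p n.+1 isT; lia.
Qed.

Lemma H0 : H 0 = 0. Proof. by []. Qed.
Lemma H1 : H 1 = 0. Proof. by []. Qed.

Lemma max_has (F : nat -> nat) s k :
  (k < \max_(p <- s) F p) = has (fun p => k < F p) s.
Proof.
elim: s => [|x s IH]; first by rewrite big_nil.
by rewrite big_cons /= leq_max IH.
Qed.

Lemma H_small v : v <= 1 -> H v = 0.
Proof. by case: v => [|[|]]. Qed.

Lemma H_ge k n : (k.+2 <= H n) <-> exists p, prime p /\ k.+1 <= H (logn p n).
Proof.
rewrite H_rec; case: ifP => n1.
- split; first by [].
  case=> p [pp h].
  move: n1 h; case: n => [|[|n]] // _; by rewrite ?logn0 ?logn1 H0.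
- rewrite ltnS max_has; split.
  + by case/hasP => p; rewrite mem_primes => /and3P [pp _ _] h; exists p.
  + case=> p [pp h]; apply/hasP; exists p => //.
    rewrite -logn_gt0; case: (logn p n) h => // ; by rewrite H0.
Qed.

Lemma H_pow2 x : 0 < x -> H (expn 2 x) = (H x).+1.
Proof.
move=> x0; rewrite H_rec.
have -> : (expn 2 x <= 1) = false.
  by apply/negbTE; rewrite -ltnNge -[X in X < _](expn0 2) ltn_exp2l.
by rewrite primesX // (primes_prime (isT : prime 2)) big_seq1 pfactorK.
Qed.

Lemma tetr_gt0 j : 0 < tetr 2 j.
Proof. case: j => [|j] //; by rewrite tetrS expn_gt0. Qed.

Lemma H_tetr j : H (tetr 2 j) = j.
Proof. elim: j => [|j IH] //; by rewrite tetrS H_pow2 ?IH // tetr_gt0. Qed.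

Lemma tetr_le j v : j.+1 <= H v -> tetr 2 j.+1 <= v.
Proof.
elim: j v => [|j IH] v.
- rewrite H_rec; case: ifP => //; rewrite /=; lia.
- move=> hv; have v1 : 1 < v.
    by case: v hv => [|[|]] //.
  case/H_ge: hv => p [pp h]; have := IH _ h => {}IH.
  rewrite tetrS.
  apply: (@leq_trans (expn p (logn p v))); last first.
    by apply: dvdn_leq; [lia | apply: pfactor_dvdnn].
  apply: (@leq_trans (expn 2 (logn p v))); first by rewrite leq_exp2l.
  have := tetr_gt0 j.+1; have := prime_gt1 pp => p1 t0.
  rewrite leq_exp2r //; lia.
Qed.
Arguments tetr_le {j v}.

Lemma exp23 b : 2 <= b -> 2 * expn 2 b <= expn 3 b.
Proof.
elim: b => [|b IH] hb //.
case: (leqP 2 b) => h.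
- rewrite !expnS; have := IH h; lia.
- have -> : b = 1 by lia. by [].
Qed.

Lemma two_le_pow x : 2 * x <= expn 2 x.
Proof.
elim: x => [|x IH] //. have := ltn_expl x (isT : 1 < 2). rewrite expnS; lia.
Qed.

Lemma tetr_ge2 j : 2 <= tetr 2 j.+1.
Proof.
rewrite tetrS -[X in X <= _](expn1 2) leq_exp2l //; exact: tetr_gt0.
Qed.

Lemma gap j v : j.+2 <= H v -> v = tetr 2 j.+2 \/ 2 * tetr 2 j.+2 <= v.
Proof.
move=> hv; have v0 : 0 < v by case: v hv.
case/H_ge: hv => p [pp h]; have hb := tetr_le h.
have b2 := tetr_ge2 j.
move: hb b2; rewrite (tetrS 2 j.+1); set b := tetr 2 j.+1 => hb b2.
have hd : expn p b %| v by rewrite pfactor_dvdn.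
case: (p =P 2) => [e|ne].
- subst p; case/dvdnP: hd => w hw.
  move: hw v0; case: w => [|[|w]] hw v0.
  + by rewrite hw in v0.
  + by left; rewrite hw mul1n.
  + right; rewrite hw; lia.
- right; have p3 : 3 <= p by have := prime_gt1 pp; lia.
  have h3 : expn 3 b <= expn p b by rewrite leq_exp2r //; lia.
  have h4 : expn p b <= v by exact: dvdn_leq.
  have := @exp23 b b2; lia.
Qed.

Arguments gap {j v}.

Lemma eqH_split n m : (H n == m.+2) = (m.+2 <= H n) && ~~ (m.+3 <= H n).
Proof. by rewrite eqn_leq leqNgt andbC. Qed.

Lemma good_bound j n : 0 < n ->
  (forall d, 3 <= d -> ~~ (expn d (tetr 2 j.+2) %| n)) ->
  (H n == j.+3) = (expn 2 (tetr 2 j.+2) %| n) && ~~ (expn 2 (tetr 2 j.+2).+1 %| n).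
Proof.
move=> n0 hd; have a0 := tetr_gt0 j.+2.
have hp : forall p, prime p -> 3 <= p -> logn p n < tetr 2 j.+2.
  by move=> p pp p3; rewrite ltnNge -pfactor_dvdn //; exact: hd.
have h2 : logn 2 n < 2 * tetr 2 j.+2.
  by rewrite ltnNge -pfactor_dvdn // expnM; exact: hd.
have hall : forall p, prime p -> logn p n < 2 * tetr 2 j.+2.
  move=> p pp; case: (p =P 2) => [->//|ne].
  have := prime_gt1 pp => p1; have := hp p pp; lia.
have T2a : 2 * tetr 2 j.+2 <= tetr 2 j.+3 by rewrite (tetrS 2 j.+2) two_le_pow.
have nge4 : ~~ (j.+4 <= H n).
  apply/negP => /H_ge [p [pp h]]; have := tetr_le h; have := hall p pp; lia.
have ge3 : (j.+3 <= H n) = (logn 2 n == tetr 2 j.+2).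
  apply/idP/idP.
  - move/H_ge => [p [pp h]]; case: (p =P 2) => [e|ne].
    + subst p; case: (gap h) => [->//|e]; lia.
    + have := tetr_le h; have := hp p pp; have := prime_gt1 pp; lia.
  - move/eqP => e; apply/H_ge; exists 2; split => //; by rewrite e H_tetr.
rewrite eqH_split ge3 (negbTE nge4) andbT !pfactor_dvdn //.
apply/eqP/andP => [->|[l1 l2]]; first by split; rewrite // -ltnNge.
lia.
Qed.

Lemma agree n g : (forall p, prime p -> logn p n = logn p g \/ (logn p n <= 1 /\ logn p g <= 1)) ->
  forall k, (k.+2 <= H n) = (k.+2 <= H g).
Proof.
move=> hyp k; apply/idP/idP => /H_ge [p [pp h]]; apply/H_ge; exists p; split => //;
  case: (hyp p pp) => [e|[e1 e2]].
- by rewrite -e.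
- by rewrite H_small in h.
- by rewrite e.
- by rewrite H_small in h.
Qed.

Lemma prime_dvd_fact p n : prime p -> p %| n`! -> p <= n.
Proof.
move=> pp; elim: n => [|n IH]; first by rewrite dvdn1 => /eqP e; rewrite e in pp.
rewrite factS Euclid_dvdM // => /orP [h|h].
- exact: dvdn_leq.
- have := IH h; lia.
Qed.

Lemma good_ex j P K n : 0 < n -> 0 < K ->
  (forall d, 2 <= d -> d <= P -> ~~ (expn d K %| n)) ->
  (forall d, P < d -> ~~ (expn d 2 %| n)) ->
  (H n == j.+2) = (H (gcdn n (expn P`! K)) == j.+2).
Proof.
move=> n0 K0 h1 h2.
have Q0 : 0 < expn P`! K by rewrite expn_gt0 fact_gt0.
have hyp : forall p, prime p -> logn p n = logn p (gcdn n (expn P`! K)) \/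
     (logn p n <= 1 /\ logn p (gcdn n (expn P`! K)) <= 1).
  move=> p pp; rewrite logn_gcd // lognX.
  have p1 := prime_gt1 pp.
  case: (leqP p P) => hpP.
  - have f1 : 0 < logn p P`!.
      by rewrite logn_gt0 mem_primes pp fact_gt0 dvdn_fact // prime_gt0.
    have l1 : logn p n < K.
      by rewrite ltnNge -pfactor_dvdn //; apply: h1 => //; lia.
    have : K <= K * logn p P`! by rewrite leq_pmulr.
    left; lia.
  - have f0 : logn p P`! = 0.
      apply/eqP; rewrite -leqn0 leqNgt logn_gt0 mem_primes pp fact_gt0 /=.
      apply/negP => /(prime_dvd_fact _ _ pp); lia.
    have : logn p n <= 1 by rewrite leqNgt -pfactor_dvdn //; apply: h2.
    right; rewrite f0 muln0; lia.
by rewrite !eqH_split !(agree _ _ hyp).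
Qed.

Lemma count_dvd d N : 0 < d -> count (fun n => d %| n) (iota 1 N) = N %/ d.
Proof.
move=> d0; elim: N => [|N IH]; first by rewrite div0n.
rewrite -(addn1 N) iotaD count_cat IH /= addn0 add1n addn1 (divnS _ d0) addnC.
by case: (d %| N.+1).
Qed.

Lemma count_or (a b : pred nat) s : count (fun n => a n || b n) s <= count a s + count b s.
Proof. rewrite -count_predUI; apply: leq_trans (leq_addr _ _); by apply/eq_leq/eq_count. Qed.

Lemma count_has (r : nat -> pred nat) ds s :
  count (fun n => has (fun d => r d n) ds) s <= \sum_(d <- ds) count (r d) s.
Proof.
elim: ds => [|x ds IH]; first by rewrite big_nil count_pred0.
rewrite big_cons /=; apply: leq_trans (count_or _ _ _) _; exact: leq_add.
Qed.

Lemma count_diff (a b c : pred nat) s :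
  (forall x, x \in s -> ~~ c x -> a x = b x) -> count a s <= count b s + count c s.
Proof.
elim: s => [|x s IH] //= h.
have IH' := IH (fun y ys nc => h y (ltac:(by rewrite in_cons ys orbT)) nc).
have := h x (mem_head _ _); case: (a x); case: (b x); case: (c x) => /= e; try lia;
  have := e isT; discriminate.
Qed.

Lemma count_andnot (A B : pred nat) s : (forall x, B x -> A x) ->
  count (fun x => A x && ~~ B x) s + count B s = count A s.
Proof.
move=> hBA; elim: s => [|x s IH] //=.
have := hBA x; case: (A x); case: (B x) => //= hx; try lia.
Qed.

Lemma count_shift (f : pred nat) Q s L k : (forall n, f (n + Q) = f n) ->
  count f (iota (s + k * Q) L) = count f (iota s L).
Proof.
move=> hf; rewrite addnC iotaDl count_map; apply: eq_count => x /=.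
elim: k => [|k IH] //=; by rewrite mulSn -addnA addnC hf.
Qed.

Lemma count_period (f : pred nat) Q q : (forall n, f (n + Q) = f n) ->
  count f (iota 1 (q * Q)) = q * count f (iota 1 Q).
Proof.
move=> hf; elim: q => [|q IH] //.
by rewrite mulSnr iotaD count_cat IH count_shift // mulSnr.
Qed.

Lemma count_periodic (f : pred nat) Q N : (forall n, f (n + Q) = f n) ->
  exists c', c' <= N %% Q /\
   count f (iota 1 N) = N %/ Q * count f (iota 1 Q) + c'.
Proof.
move=> hf; exists (count f (iota (1 + N %/ Q * Q) (N %% Q))); split.
  by apply: leq_trans (count_size _ _) _; rewrite size_iota.
by rewrite {1}(divn_eq N Q) iotaD count_cat count_period.
Qed.

Lemma INR_addn m n : INR (m + n) = (INR m + INR n)%R.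
Proof. by rewrite -plusE plus_INR. Qed.
Lemma INR_muln m n : INR (m * n) = (INR m * INR n)%R.
Proof. by rewrite -multE mult_INR. Qed.
Lemma INR_expn m n : INR (expn m n) = (INR m ^ n)%R.
Proof. by rewrite -powE pow_INR. Qed.
Lemma INR_leq m n : m <= n -> (INR m <= INR n)%R.
Proof. move/leP; exact: le_INR. Qed.
Lemma INR_pos n : 0 < n -> (0 < INR n)%R.
Proof. move/ltP; exact: lt_0_INR. Qed.
Arguments INR_pos {n}.
Arguments INR_leq {m n}.

Lemma INR_div_bounds N d : 0 < d ->
  (INR N / INR d - 1 < INR (N %/ d) /\ INR (N %/ d) <= INR N / INR d)%R.
Proof.
move=> d0; have e := divn_eq N d; have hr := ltn_pmod N d0.
have hN : INR N = (INR (N %/ d) * INR d + INR (N %% d))%R.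
  by rewrite {1}e INR_addn INR_muln.
have hd := INR_pos d0.
have hr' : (INR (N %% d) < INR d)%R by apply: lt_INR; apply/ltP.
have hr0 := pos_INR (N %% d).
have hx : (INR N / INR d * INR d = INR N)%R by field; lra.
set x := (INR N / INR d)%R in hx *.
set q := INR (N %/ d) in hN *.
split; nra.
Qed.

Lemma Rabs_le_between a b : (Rabs a <= b)%R -> (- b <= a <= b)%R.
Proof.
move=> h; have h1 := Rle_abs a; have h2 := Rle_abs (- a); rewrite Rabs_Ropp in h2; lra.
Qed.

Definition sumR (f : nat -> R) (s : seq nat) : R := foldr (fun x acc => (f x + acc)%R) 0%R s.

Lemma INR_sum f s : INR (\sum_(d <- s) f d) = sumR (fun d => INR (f d)) s.
Proof.
elim: s => [|x s IH]; first by rewrite big_nil.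
by rewrite big_cons INR_addn IH.
Qed.

Lemma sumR_le f g s : (forall d, d \in s -> (f d <= g d)%R) -> (sumR f s <= sumR g s)%R.
Proof.
elim: s => [|x s IH] h /=; first lra.
have h1 := h x (mem_head _ _).
have h2 : (sumR f s <= sumR g s)%R.
  by apply: IH => d ds; apply: h; rewrite in_cons ds orbT.
lra.
Qed.

Lemma sumR_scal c f s : sumR (fun d => c * f d)%R s = (c * sumR f s)%R.
Proof. elim: s => [|x s IH] /=; [ring | rewrite IH; ring]. Qed.

Lemma sumR_const c s : sumR (fun _ => c) s = (INR (size s) * c)%R.
Proof.
elim: s => [|x s IH]; first by rewrite /=; ring.
rewrite (_ : size (x :: s) = (size s).+1) // S_INR; move: IH; rewrite /sumR /= => ->; ring.
Qed.

Lemma sumR_sq k L : 2 <= k ->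
  (sumR (fun d => / INR (expn d 2)) (iota k L) <= / (INR k - 1))%R.
Proof.
elim: L k => [|L IH] k hk /=.
- have : (2 <= INR k)%R by have := INR_leq hk; simpl; lra.
  move=> h; have := Rinv_0_lt_compat (INR k - 1) ltac:(lra); lra.
- have := IH k.+1 ltac:(lia); rewrite S_INR => h.
  have hk2 : (2 <= INR k)%R by have := INR_leq hk; simpl; lra.
  rewrite INR_expn /=.
  have e : (/ (INR k - 1) - (/ (INR k * (INR k * 1)) + / (INR k + 1 - 1))
            = / (INR k * INR k * (INR k - 1)))%R by field; lra.
  have p : (0 < / (INR k * INR k * (INR k - 1)))%R.
    apply: Rinv_0_lt_compat; apply: Rmult_lt_0_compat; [nra | lra].
  lra.
Qed.

Lemma sum_div_le N g s : (forall d, d \in s -> 0 < g d) ->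
  (INR (\sum_(d <- s) N %/ g d) <= INR N * sumR (fun d => / INR (g d)) s)%R.
Proof.
move=> hg; rewrite INR_sum -sumR_scal; apply: sumR_le => d ds.
have [_ h] := INR_div_bounds N _ (hg d ds). exact: h.
Qed.

Lemma count_dvd_le d N : count (fun n => d %| n) (iota 1 N) <= N %/ d.
Proof.
case: d => [|d]; last by rewrite count_dvd.
rewrite (@eq_in_count _ _ pred0) ?count_pred0 // => n.
by rewrite mem_iota dvd0n => /andP [h _]; case: n h.
Qed.

Lemma Rdiv_approx a n b e q : (0 < n)%R -> (Rabs (a - n * b) <= n * e + q)%R ->
  (Rabs (a / n - b) <= e + q / n)%R.
Proof.
move=> n0 h.
have -> : (a / n - b = (a - n * b) * / n)%R by field; lra.
have ni := Rinv_0_lt_compat n n0.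
rewrite Rabs_mult (Rabs_pos_eq (/ n)); last lra.
have -> : (e + q / n = (n * e + q) * / n)%R by field; lra.
apply: Rmult_le_compat_r; lra.
Qed.

Lemma aux_pPn p x n : (0 < p)%R -> (p * p <= x)%R -> (0 <= n)%R -> (p * (n / x) <= n / p)%R.
Proof.
move=> p0 px n0.
have h : (/ x <= / (p * p))%R by apply: Rinv_le_contravar; nra.
have -> : (n / p = p * (n * / (p * p)))%R by field; lra.
apply: Rmult_le_compat_l; first lra.
apply: Rmult_le_compat_l; lra.
Qed.

Lemma approx_ex j P : 0 < P -> exists c : R, forall N, 0 < N ->
  (Rabs (density_seq j.+2 N - c) <= 2 / INR P + INR (expn P`! (P * P)) / INR N)%R.
Proof.
move=> P0.
set K := P * P; set Q := expn P`! K.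
have Q0 : 0 < Q by rewrite expn_gt0 fact_gt0.
have K0 : 0 < K by rewrite muln_gt0 P0.
set f := fun n => H (gcdn n Q) == j.+2.
set C := count f (iota 1 Q).
exists (INR C / INR Q)%R => N N0.
set E := fun n => H n == j.+2.
set bad := fun n => has (fun d => expn d K %| n) (iota 2 P) || has (fun d => expn d 2 %| n) (iota P.+1 N).
have good : forall n, n \in iota 1 N -> ~~ bad n -> E n = f n.
  move=> n; rewrite mem_iota => /andP [n1 nN]; rewrite /bad negb_or => /andP [nb1 nb2].
  apply: good_ex => //.
  - move=> d d2 dP; apply/negP => hd; move/negP: nb1; apply; apply/hasP; exists d => //.
    rewrite mem_iota; lia.
  - move=> d dP; apply/negP => hd; move/negP: nb2; apply; apply/hasP; exists d => //.
    have h1 : expn d 2 <= n by apply: dvdn_leq.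
    have h2 : d <= expn d 2 by rewrite expnS expn1 leq_pmulr //; lia.
    rewrite mem_iota; lia.
have c1 := count_diff E f bad (iota 1 N) good.
have c2 := count_diff f E bad (iota 1 N) (fun x xs nb => esym (good x xs nb)).
have cb : count bad (iota 1 N) <=
    \sum_(d <- iota 2 P) N %/ expn d K + \sum_(d <- iota P.+1 N) N %/ expn d 2.
  apply: leq_trans (count_or _ _ _) _; apply: leq_add;
    apply: leq_trans (count_has _ _ _) _; apply: leq_sum => d _; exact: count_dvd_le.
have hN := INR_pos N0; have hP := INR_pos P0.
have b1 : (INR (\sum_(d <- iota 2 P) N %/ expn d K) <= INR N / INR P)%R.
  rewrite INR_sum.
  apply: (@Rle_trans _ (sumR (fun _ => INR N / INR (expn 2 K)) (iota 2 P))%R).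
    apply: sumR_le => d; rewrite mem_iota => /andP [d2 _].
    have [_ h] := INR_div_bounds N (expn 2 K) (expn_gt0 _ _).
    apply: Rle_trans h; apply: INR_leq; apply: leq_div2l; first by rewrite expn_gt0.
    by rewrite leq_exp2r.
  rewrite sumR_const size_iota; apply: aux_pPn => //; last exact: pos_INR.
  rewrite -INR_muln; apply: INR_leq; exact: ltnW (ltn_expl _ _).
have b2 : (INR (\sum_(d <- iota P.+1 N) N %/ expn d 2) <= INR N / INR P)%R.
  apply: Rle_trans (sum_div_le _ _ _ _) _.
    move=> d; rewrite mem_iota => /andP [h _]; rewrite expn_gt0; apply/orP; left; lia.
  have := sumR_sq P.+1 N ltac:(lia); rewrite S_INR.
  have -> : (INR P + 1 - 1 = INR P)%R by ring.
  move=> h; rewrite /Rdiv; apply: Rmult_le_compat_l => //; lra.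
have hbad : (INR (count bad (iota 1 N)) <= INR N * (2 / INR P))%R.
  have := INR_leq cb; rewrite INR_addn.
  have -> : (INR N * (2 / INR P) = INR N / INR P + INR N / INR P)%R by field; lra.
  lra.
have fper : forall n, f (n + Q) = f n.
  by move=> n; rewrite /f gcdnC gcdnDr gcdnC.
have [c' [hc' ec]] := count_periodic f Q N fper.
have CQ : C <= Q by rewrite /C; apply: leq_trans (count_size _ _) _; rewrite size_iota.
have eN := divn_eq N Q.
have hr := ltn_pmod N Q0.
have RN : INR N = (INR (N %/ Q) * INR Q + INR (N %% Q))%R by rewrite {1}eN INR_addn INR_muln.
have Rf : INR (count f (iota 1 N)) = (INR (N %/ Q) * INR C + INR c')%R by rewrite ec INR_addn INR_muln.
have hQ := INR_pos Q0.
have RCQ : (INR C <= INR Q)%R by apply: INR_leq.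
have Rc' : (INR c' <= INR (N %% Q))%R by apply: INR_leq.
have Rr : (INR (N %% Q) <= INR Q)%R by apply: INR_leq; exact: ltnW.
have Rc0 := pos_INR c'.
have Rr0 := pos_INR (N %% Q).
have RC0 := pos_INR C.
have t1 : (0 <= INR (N %% Q) * (INR C / INR Q) <= INR (N %% Q))%R.
  have : (0 <= INR C / INR Q <= 1)%R.
    split; first by apply: Rmult_le_pos; [lra | apply: Rlt_le; apply: Rinv_0_lt_compat; lra].
    apply: (Rmult_le_reg_r (INR Q)) => //; rewrite /Rdiv Rmult_assoc Rinv_l; lra.
  nra.
have key : (Rabs (INR (count f (iota 1 N)) - INR N * (INR C / INR Q)) <= INR Q)%R.
  rewrite Rf RN.
  have -> : ((INR (N %/ Q) * INR Q + INR (N %% Q)) * (INR C / INR Q)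
             = INR (N %/ Q) * INR C + INR (N %% Q) * (INR C / INR Q))%R by field; lra.
  apply: Rabs_le; lra.
rewrite /density_seq /countH -/E.
apply: Rdiv_approx => //.
have hc1 := INR_leq c1; have hc2 := INR_leq c2.
rewrite !INR_addn in hc1 hc2.
move: key; rewrite -/f => key.
apply: Rabs_le.
case: (Rabs_le_between _ _ key); lra.
Qed.

Lemma tetr_ge16 j : 0 < j -> 16 <= tetr 2 j.+2.
Proof.
elim: j => [|j IH] // _.
case: j IH => [|j] IH; first by [].
have := IH isT; rewrite (tetrS 2 j.+3).
have := ltn_expl (tetr 2 j.+3) (isT : 1 < 2); lia.
Qed.

Lemma pow34 b : 4 <= b -> 3 * expn 3 b <= expn 4 b.
Proof.
elim: b => [|b IH] // hb.
case: (leqP 4 b) => h.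
- rewrite !expnS; have := IH h; lia.
- have -> : b = 3 by lia. by [].
Qed.

Lemma INR3 : INR 3 = 3%R.
Proof. simpl; lra. Qed.

Lemma approx_bound j N : 0 < j -> 0 < N ->
  (Rabs (density_seq j.+3 N - / 2 * / INR (tetr 2 j.+3)) <=
     2 / 3 ^ (tetr 2 j.+2) + 1 / INR N)%R.
Proof.
move=> j0 N0.
have a16 := tetr_ge16 _ j0.
rewrite (tetrS 2 j.+2); set a := tetr 2 j.+2 in a16 *.
have a0 : 0 < a by lia.
set E := fun n => H n == j.+3.
set M := fun n => (expn 2 a %| n) && ~~ (expn 2 a.+1 %| n).
set bad := fun n => has (fun d => expn d a %| n) (iota 3 N.+1).
have good : forall n, n \in iota 1 N -> ~~ bad n -> E n = M n.
  move=> n; rewrite mem_iota => /andP [n1 nN] nb.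
  apply: good_bound => // d d3; apply/negP => hd; move/negP: nb; apply; apply/hasP.
  exists d => //.
  have h1 : expn d a <= n by apply: dvdn_leq.
  have h2 : d <= expn d a.
    by rewrite -{1}(expn1 d); apply: leq_pexp2l; lia.
  rewrite mem_iota; lia.
have c1 := count_diff E M bad (iota 1 N) good.
have c2 := count_diff M E bad (iota 1 N) (fun x xs nb => esym (good x xs nb)).
have cM := count_andnot (fun n => expn 2 a %| n) (fun n => expn 2 a.+1 %| n) (iota 1 N)
   (fun x h => dvdn_trans (dvdn_exp2l 2 (leqnSn a)) h).
rewrite -/M !count_dvd ?expn_gt0 // in cM.
have cb : count bad (iota 1 N) <= \sum_(d <- iota 3 N.+1) N %/ expn d a.
  apply: leq_trans (count_has _ _ _) _; apply: leq_sum => d _; exact: count_dvd_le.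
have hN := INR_pos N0.
have sb : (sumR (fun d => / INR (expn d a)) (iota 3 N.+1) <= 2 / 3 ^ a)%R.
  rewrite /=.
  have e3 : INR (expn 3 a) = (3 ^ a)%R by rewrite INR_expn INR3.
  have p3 : (0 < 3 ^ a)%R by apply: pow_lt; lra.
  have X0 : (0 < INR (expn 4 (a - 2)))%R by apply: INR_pos; rewrite expn_gt0.
  have s4 : (sumR (fun d => / INR (expn d a)) (iota 4 N) <= / INR (expn 4 (a - 2)) * / 3)%R.
    apply: (@Rle_trans _ (sumR (fun d => / INR (expn 4 (a - 2)) * / INR (expn d 2)) (iota 4 N))%R).
      apply: sumR_le => d; rewrite mem_iota => /andP [d4 _].
      rewrite -Rinv_mult -INR_muln; apply: Rinv_le_contravar.
        by apply: INR_pos; rewrite muln_gt0 !expn_gt0; apply/andP; split => //; apply/orP; left; lia.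
      apply: INR_leq; rewrite -{2}(subnK (_ : 2 <= a)); last by lia.
      rewrite expnD leq_mul2r; apply/orP; right; rewrite leq_exp2r //; lia.
    rewrite sumR_scal; apply: Rmult_le_compat_l; first by apply: Rlt_le; apply: Rinv_0_lt_compat.
    have := sumR_sq 4 N isT; rewrite (_ : INR 4 = 4%R); last by simpl; lra.
    rewrite (_ : (4 - 1 = 3)%R) //; ring.
  have n34 : expn 3 a <= 3 * expn 4 (a - 2).
    rewrite -{1}(subnK (_ : 2 <= a)); last by lia.
    rewrite expnD; have := pow34 (a - 2) ltac:(lia); rewrite (_ : expn 3 2 = 9) //; lia.
  have r34 : (3 ^ a <= 3 * INR (expn 4 (a - 2)))%R.
    by rewrite -e3 -INR3 -INR_muln; apply: INR_leq.
  have i34 : (/ (3 * INR (expn 4 (a - 2))) <= / 3 ^ a)%R by apply: Rinv_le_contravar.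
  rewrite Rinv_mult in i34.
  rewrite e3; move: s4 i34; rewrite /Rdiv; lra.
have hbad : (INR (count bad (iota 1 N)) <= INR N * (2 / 3 ^ a))%R.
  apply: Rle_trans (INR_leq cb) _; apply: Rle_trans (sum_div_le _ _ _ _) _.
    move=> d; rewrite mem_iota => /andP [h _]; rewrite expn_gt0; apply/orP; left; lia.
  by apply: Rmult_le_compat_l => //; lra.
have hc1 := INR_leq c1; have hc2 := INR_leq c2.
rewrite !INR_addn in hc1 hc2.
have RcM := f_equal INR cM; rewrite INR_addn in RcM.
have [d1 d1'] := INR_div_bounds N (expn 2 a) (expn_gt0 _ _).
have [d2 d2'] := INR_div_bounds N (expn 2 a.+1) (expn_gt0 _ _).
have X0 : (0 < INR (expn 2 a))%R by apply: INR_pos; rewrite expn_gt0.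
have e2 : INR (expn 2 a.+1) = (2 * INR (expn 2 a))%R by rewrite expnS INR_muln.
rewrite e2 in d2 d2'.
have ee : (INR N / (2 * INR (expn 2 a)) = INR N * (/ 2 * / INR (expn 2 a)))%R by field; lra.
have ee' : (INR N / INR (expn 2 a) = 2 * (INR N * (/ 2 * / INR (expn 2 a))))%R by field; lra.
rewrite ee in d2 d2'; rewrite ee' in d1 d1'.
rewrite /density_seq /countH -/E.
apply: Rdiv_approx => //.
apply: Rabs_le.
move: RcM d1 d1' d2 d2' hc1 hc2 hbad.
set y := (INR N * (/ 2 * / INR (expn 2 a)))%R.
lra.
Qed.

Lemma cauchy_approx u : (forall eps, (0 < eps)%R -> exists c N0, forall N, N0 <= N ->
   (Rabs (u N - c) < eps)%R) -> Cauchy_crit u.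
Proof.
move=> h eps e0; have [c [N0 hN]] := h (eps / 2)%R ltac:(lra).
exists N0 => n k hn hk; rewrite /R_dist.
have h1 := hN n (introT leP hn); have h2 := hN k (introT leP hk).
have := Rabs_le_between _ _ (Rlt_le _ _ h1); have := Rabs_le_between _ _ (Rlt_le _ _ h2).
move=> b2 b1.
have l1 : (Rabs (u n - c) < eps / 2)%R := h1.
have l2 : (Rabs (u k - c) < eps / 2)%R := h2.
have t := Rabs_triang (u n - c) (c - u k).
rewrite (Rabs_minus_sym c) in t.
have -> : (u n - u k = (u n - c) + (c - u k))%R by ring.
lra.
Qed.

Lemma lim_bound u D c B : Un_cv u D ->
  (forall N, 0 < N -> (Rabs (u N - c) <= B + 1 / INR N)%R) -> (Rabs (D - c) <= B)%R.
Proof.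
move=> hu hb; apply: Rnot_lt_le => hlt.
set eps := ((Rabs (D - c) - B) / 2)%R.
have e0 : (0 < eps)%R by rewrite /eps; lra.
have [N1 hN1] := hu eps e0.
have [N2 [hN2 N2p]] := archimed_cor1 eps e0.
set N := maxn N1 N2.
have h1 := hN1 N ltac:(apply/leP; exact: leq_maxl).
rewrite /R_dist in h1.
have N2p' : 0 < N2 by apply/ltP.
have hN : 0 < N by rewrite /N; apply: leq_trans N2p' (leq_maxr _ _).
have h2 := hb N hN.
have i : (1 / INR N <= / INR N2)%R.
  rewrite /Rdiv Rmult_1_l; apply: Rinv_le_contravar; first exact: INR_pos.
  apply: INR_leq; exact: leq_maxr.
have t := Rabs_triang (D - u N) (u N - c).
rewrite (Rabs_minus_sym D) in t.
have e : ((D - u N) + (u N - c) = D - c)%R by ring.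
rewrite e in t.
rewrite /eps in hN2 h1; lra.
Qed.

Theorem lemma6 (m : nat) (hm : 4 <= m) :
  exists D : R,
    Un_cv (density_seq m) D /\
    (Rabs (D - / 2 * / INR (tetr 2 m)) <= 3 / (3 ^ (tetr 2 (m - 1))))%R.
Proof.
have [j ej] : exists j, m = j.+3 by exists (m - 3); lia.
subst m; have j0 : 0 < j by lia.
have -> : j.+3 - 1 = j.+2 by lia.
have cc : Cauchy_crit (density_seq j.+3).
  apply: cauchy_approx => eps e0.
  have [P [hP P0]] := archimed_cor1 (eps / 4) ltac:(lra).
  have P0' : 0 < P by apply/ltP.
  have [c hc] := approx_ex j.+1 P P0'.
  set Q := expn P`! (P * P) in hc.
  have hQ : (0 < INR Q)%R by apply: INR_pos; rewrite expn_gt0 fact_gt0.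
  have [N0 [hN0 N00]] := archimed_cor1 (eps / (4 * INR Q)) ltac:(apply: Rdiv_lt_0_compat; lra).
  exists c, N0 => N hN.
  have N0' : 0 < N0 by apply/ltP.
  have hc' := hc N (leq_trans N0' hN).
  have i : (INR Q / INR N <= INR Q / INR N0)%R.
    apply: Rmult_le_compat_l; first lra.
    apply: Rinv_le_contravar; [exact: INR_pos | exact: INR_leq].
  have i2 : (INR Q / INR N0 < eps / 4)%R.
    have : (INR Q * / INR N0 < INR Q * (eps / (4 * INR Q)))%R.
      by apply: Rmult_lt_compat_l.
    have -> : (INR Q * (eps / (4 * INR Q)) = eps / 4)%R by field; lra.
    by [].
  have i3 : (2 / INR P < eps / 2)%R by rewrite /Rdiv; lra.
  apply: Rle_lt_trans hc' _; lra.
have [D hD] := R_complete _ cc.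
exists D; split => //.
have hb := lim_bound _ _ _ _ hD (fun N hN => approx_bound j N j0 hN).
have p3 : (0 < 3 ^ tetr 2 j.+2)%R by apply: pow_lt; lra.
apply: Rle_trans hb _; rewrite /Rdiv; apply: Rmult_le_compat_r; first by apply: Rlt_le; apply: Rinv_0_lt_compat.
lra.
Qed.
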